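(* For every $y\in\mathrm{Cay}$, $[y]=\mathcal{B}(\gamma(y))$. Moreover, for every permutation $\sigma$, $\mathcal{B}(\sigma)=[\sigma^{-1}]$.
   Context: $\mathrm{Cay}_n$ is the set of Cayley permutations of length $n$ (words of positive integers in which every integer from $1$ to the maximum occurs), $\mathrm{WI}_n$ its weakly increasing elements, $\mathrm{Cay}=\bigcup_n\mathrm{Cay}_n$. For $(u,v)\in\mathrm{WI}_n\times\mathrm{Cay}_n$, viewed as a biword with columns $\binom{u(i)}{v(i)}$, the Burge transpose $(u,v)^T$ turns every column $\binom{a}{b}$ into $\binom{b}{a}$ and sorts the columns increasingly by top entry, ties by decreasing bottom entry. For $x\in\mathrm{Cay}_n$, $\gamma(x)$ is the bottom row of $(1\,2\cdots n,\;x)^T$ (a permutation of $[n]$). $x\sim y$ iff $\gamma(x)=\gamma(y)$; $[y]$ is the class of $y$. For a permutation $\pi$ of $[n]$ with descent set $\mathrm{Des}(\pi)=\{i:\pi(i)>\pi(i+1)\}$, let $\mathrm{WI}(\pi)=\{u\in\mathrm{WI}_n:\mathrm{Des}(u)\subseteq\mathrm{Des}(\pi)\}$, where for weakly increasing $u$, $\mathrm{Des}(u)=\{i:u(i)=u(i+1)\}$. For $u\in\mathrm{WI}(\pi)$ the transpose $(u,\pi)^T$ has top row $1\,2\cdots n$; the Fishburn basis $\mathcal{B}(\pi)$ is the set of bottom rows of $(u,\pi)^T$ over all $u\in\mathrm{WI}(\pi)$. *)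

(* Defs.v *)
From mathcomp Require Import all_boot.
Set Implicit Arguments. Unset Strict Implicit. Unset Printing Implicit Defensive.

Definition wmax (w : seq nat) : nat := foldr maxn 0 w.

Definition is_cay (w : seq nat) : bool :=
  all (fun a => 0 < a) w && all (fun k => k \in w) (iota 1 (wmax w)).

Definition is_wi (u : seq nat) : bool := is_cay u && sorted leq u.

Definition is_perm (s : seq nat) : bool := perm_eq s (iota 1 (size s)).

Definition perm_inv (s : seq nat) : seq nat :=
  mkseq (fun i => (index i.+1 s).+1) (size s).

(* Biword columns (top, bottom). Order used by the Burge transpose:
   increasing top entry, ties by decreasing bottom entry. *)
Definition burge_le (c d : nat * nat) : bool :=
  (c.1 < d.1) || ((c.1 == d.1) && (d.2 <= c.2)).

Definition burge (u v : seq nat) : seq (nat * nat) :=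
  sort burge_le [seq (p.2, p.1) | p <- zip u v].

Definition bottom (b : seq (nat * nat)) : seq nat := [seq p.2 | p <- b].
Definition top (b : seq (nat * nat)) : seq nat := [seq p.1 | p <- b].

Definition gamma (x : seq nat) : seq nat := bottom (burge (iota 1 (size x)) x).

Definition cls (y : seq nat) (x : seq nat) : Prop := is_cay x /\ gamma x = gamma y.

(* Descent set of a permutation (0-based positions i with w_i > w_{i+1}). *)
Definition Des (w : seq nat) : seq nat :=
  [seq i <- iota 0 (size w).-1 | nth 0 w i.+1 < nth 0 w i].

Definition DesWI (u : seq nat) : seq nat :=
  [seq i <- iota 0 (size u).-1 | nth 0 u i == nth 0 u i.+1].

Definition WIof (pi u : seq nat) : bool :=
  is_wi u && (size u == size pi) && all (fun i => i \in Des pi) (DesWI u).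

Definition fishburn (pi : seq nat) (x : seq nat) : Prop :=
  exists u, WIof pi u /\ x = bottom (burge u pi).

(* Main.v *)
Require Import Defs.
From mathcomp Require Import all_boot zify.
Set Implicit Arguments. Unset Strict Implicit. Unset Printing Implicit Defensive.

Notation sw L := [seq (p.2, p.1) | p <- L].

Lemma swK (L : seq (nat * nat)) : sw (sw L) = L.
Proof. by elim: L => [|[a b] L IH] //=; rewrite IH. Qed.

Lemma unzip1_sw (L : seq (nat * nat)) : unzip1 (sw L) = unzip2 L.
Proof. by elim: L => [|[a b] L IH] //=; rewrite IH. Qed.

Lemma unzip2_sw (L : seq (nat * nat)) : unzip2 (sw L) = unzip1 L.
Proof. by elim: L => [|[a b] L IH] //=; rewrite IH. Qed.

Lemma bl_total : total burge_le.
Proof. move=> [a b] [c d]; rewrite /burge_le /=. lia. Qed.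
Lemma bl_trans : transitive burge_le.
Proof. move=> [a b] [c d] [e f]; rewrite /burge_le /=. lia. Qed.
Lemma bl_anti : antisymmetric burge_le.
Proof. move=> [a b] [c d]; rewrite /burge_le /= => /andP[H1 H2].
have [-> ->] : a = c /\ b = d by lia. by []. Qed.

Lemma wmaxE s : wmax s = \max_(i <- s) i.
Proof. by elim: s => [|a s IH]; rewrite ?big_nil ?big_cons //= IH. Qed.

Lemma cay_perm s t : perm_eq s t -> is_cay s = is_cay t.
Proof.
move=> H; rewrite /is_cay (perm_all _ H) !wmaxE (perm_big _ H).
congr (_ && _); apply: eq_all => k; exact: perm_mem.
Qed.

Lemma sorted_fst L : sorted burge_le L -> sorted leq (unzip1 L).
Proof.
apply: homo_sorted => [[a b] [c d]]; rewrite /burge_le /=; lia.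
Qed.

Lemma lemA n (pi u : seq nat) :
  perm_eq pi (iota 1 n) -> size u = n -> size pi = n ->
  sorted burge_le (zip u pi) ->
  perm_eq (bottom (burge u pi)) u /\ gamma (bottom (burge u pi)) = pi.
Proof.
move=> Hpi Hu Hs Hsort.
set T := burge u pi.
have HT : perm_eq T (sw (zip u pi)) by rewrite /T /burge perm_sort.
have H1 : unzip1 T = iota 1 n.
  apply: (sorted_eq leq_trans anti_leq).
  - apply: sorted_fst; exact: sort_sorted bl_total _.
  - exact: iota_sorted.
  - have H : perm_eq (unzip1 T) (unzip1 (sw (zip u pi))) := perm_map (@fst nat nat) HT.
    rewrite unzip1_sw unzip2_zip ?Hu ?Hs // in H.
    exact: perm_trans H Hpi.
have Hx : perm_eq (bottom T) u.
  have H : perm_eq (unzip2 T) (unzip2 (sw (zip u pi))) := perm_map (@snd nat nat) HT.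
  by rewrite unzip2_sw unzip1_zip ?Hu ?Hs // in H.
split => //.
have Hsz : size (bottom T) = n by rewrite (perm_size Hx).
change (bottom T) with (unzip2 T) in Hsz |- *.
rewrite /gamma /burge Hsz -H1 zip_unzip.
have -> : sort burge_le (sw T) = sort burge_le (zip u pi).
  apply/perm_sortP; [exact: bl_total|exact: bl_trans|exact: bl_anti|].
  by rewrite -(swK (zip u pi)) perm_map.
rewrite (sorted_sort bl_trans Hsort).
change (unzip2 (zip u pi) = pi). by rewrite unzip2_zip ?Hu ?Hs.
Qed.
Lemma sorted_zip_iota m (x : seq nat) : sorted burge_le (zip (iota m (size x)) x).
Proof.
apply/(sortedP (0,0)) => i; rewrite size_zip size_iota minnn => Hi.
rewrite !nth_zip ?size_iota // !nth_iota //; last by lia.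
rewrite /burge_le /=; lia.
Qed.

Lemma lemB (x : seq nat) :
  let S := burge (iota 1 (size x)) x in
  [/\ perm_eq (top S) x, S = zip (top S) (gamma x),
      bottom (burge (top S) (gamma x)) = x,
      perm_eq (gamma x) (iota 1 (size x)) &
      size (top S) = size x /\ size (gamma x) = size x].
Proof.
move=> S.
have HS : perm_eq S (sw (zip (iota 1 (size x)) x)) by rewrite /S /burge perm_sort.
have Hszip : size (zip (iota 1 (size x)) x) = size x by rewrite size_zip size_iota minnn.
have Ht : perm_eq (top S) x.
  have H : perm_eq (unzip1 S) (unzip1 (sw (zip (iota 1 (size x)) x))) := perm_map (@fst nat nat) HS.
  by rewrite unzip1_sw unzip2_zip ?size_iota // in H.
have Hg : perm_eq (gamma x) (iota 1 (size x)).
  have H : perm_eq (unzip2 S) (unzip2 (sw (zip (iota 1 (size x)) x))) := perm_map (@snd nat nat) HS.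
  by rewrite unzip2_sw unzip1_zip ?size_iota // in H.
have HSe : S = zip (top S) (gamma x).
  by rewrite /gamma -/S; change (S = zip (unzip1 S) (unzip2 S)); rewrite zip_unzip.
split => //.
- rewrite {1}/burge -HSe.
  have -> : sort burge_le (sw S) = zip (iota 1 (size x)) x.
    apply: (sorted_eq bl_trans bl_anti).
    + exact: sort_sorted bl_total _.
    + exact: sorted_zip_iota.
    + rewrite perm_sort -(swK (zip (iota 1 (size x)) x)) perm_map //.
  change (unzip2 (zip (iota 1 (size x)) x) = x); rewrite unzip2_zip ?size_iota //.
- by rewrite (perm_size Ht) (perm_size Hg) size_iota.
Qed.

Lemma WI_sorted (pi u : seq nat) : WIof pi u -> sorted burge_le (zip u pi).
Proof.
case/andP => /andP[/andP[_ Hsu] /eqP Hsz] /allP Hd.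
apply/(sortedP (0,0)) => i; rewrite size_zip Hsz minnn => Hi.
rewrite !nth_zip // /burge_le /=.
have Hle : nth 0 u i <= nth 0 u i.+1 by apply: (sortedP 0 Hsu); rewrite Hsz.
case: (ltngtP (nth 0 u i) (nth 0 u i.+1)) => [//|Hgt|Heq]; first by lia.
have : i \in DesWI u by rewrite mem_filter mem_iota Heq eqxx /= Hsz; lia.
move/Hd; rewrite mem_filter => /andP[H _].
by rewrite /= ltnW.
Qed.

Lemma sorted_WI (pi u : seq nat) : is_cay u -> size u = size pi -> uniq pi ->
  sorted burge_le (zip u pi) -> WIof pi u.
Proof.
move=> Hc Hsz Hu Hs.
rewrite /WIof /is_wi Hc Hsz eqxx /=.
have -> : sorted leq u by have := sorted_fst Hs; rewrite unzip1_zip ?Hsz.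
apply/allP => i; rewrite mem_filter mem_iota => /andP[Heq Hi].
rewrite mem_filter mem_iota -Hsz Hi andbT.
have := (sortedP (0,0) Hs i); rewrite size_zip Hsz minnn !nth_zip // /burge_le /= (eqP Heq) ltnn /=.
have Hi' : i.+1 < size pi by rewrite -Hsz; lia.
move=> /(_ Hi'); rewrite eqxx /= => H.
by rewrite ltn_neqAle H andbT (nth_uniq 0 Hi' (ltnW Hi') Hu) gtn_eqF.
Qed.
Lemma mem_zip_iota (t : seq nat) a b :
  ((a, b) \in zip (iota 1 (size t)) t) = (0 < a <= size t) && (nth 0 t a.-1 == b).
Proof.
have Hsz : size (zip (iota 1 (size t)) t) = size t by rewrite size_zip size_iota minnn.
apply/(nthP (0,0))/idP.
- case=> i; rewrite Hsz => Hi; rewrite nth_zip ?size_iota // nth_iota // => [[<- <-]].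
  rewrite add1n /= eqxx andbT; lia.
- case/andP => Ha /eqP Hb; exists a.-1; first by rewrite Hsz; lia.
  rewrite nth_zip ?size_iota // nth_iota; last by lia.
  by rewrite Hb; congr pair; lia.
Qed.

Lemma swap_inj : injective (fun p : nat * nat => (p.2, p.1)).
Proof. by move=> [a b] [c d] [-> ->]. Qed.

Lemma mem_sw (L : seq (nat * nat)) a b : ((a, b) \in sw L) = ((b, a) \in L).
Proof.
elim: L => [|[c d] L IH] //=; rewrite !in_cons IH; congr orb.
by rewrite !xpair_eqE andbC.
Qed.

Lemma wmax_iota m n : wmax (iota m n.+1) = m + n.
Proof.
elim: n m => [|n IH] m /=; first by rewrite maxn0 addn0.
by move: (IH m.+1) => /= ->; lia.
Qed.

Lemma cay_iota n : is_cay (iota 1 n).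
Proof.
rewrite /is_cay; apply/andP; split; first by apply/allP => k; rewrite mem_iota; lia.
case: n => [|n] //; rewrite wmax_iota add1n; apply/allP => k; rewrite !mem_iota //.
Qed.

Lemma perm_inv_props (s : seq nat) : is_perm s ->
  is_cay (perm_inv s) /\ gamma (perm_inv s) = s.
Proof.
rewrite /is_perm => Hs.
set n := size s in Hs *.
set p := perm_inv s.
have Hp : size p = n by rewrite size_mkseq.
have Hus : uniq s by rewrite (perm_uniq Hs) iota_uniq.
have Hmem : forall b, (b \in s) = (0 < b <= n).
  by move=> b; rewrite (perm_mem Hs) mem_iota; lia.
have HP : perm_eq (zip (iota 1 n) s) (sw (zip (iota 1 n) p)).
  apply: uniq_perm.
  - apply: (@map_uniq _ _ fst); change (uniq (unzip1 (zip (iota 1 n) s))).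
    by rewrite unzip1_zip ?size_iota // iota_uniq.
  - apply: (@map_uniq _ _ snd); change (uniq (unzip2 (sw (zip (iota 1 n) p)))).
    by rewrite unzip2_sw unzip1_zip ?size_iota ?Hp // iota_uniq.
  - move=> [a b].
    rewrite mem_sw -{2}Hp mem_zip_iota /n mem_zip_iota -/n Hp.
    apply/idP/idP.
    + case/andP => Ha /eqP Hb.
      have Hbn : 0 < b <= n by rewrite -Hmem -Hb mem_nth // -/n; lia.
      rewrite Hbn /= /p /perm_inv nth_mkseq; last by lia.
      have -> : b.-1.+1 = b by lia.
      rewrite -Hb index_uniq //; last by rewrite -/n; lia.
      by rewrite prednK //; case/andP: Ha.
    + case/andP => Hb /eqP Ha.
      move: Ha; rewrite /p /perm_inv nth_mkseq; last by lia.
      have -> : b.-1.+1 = b by lia.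
      have Hbs : b \in s by rewrite Hmem.
      have Hi := index_mem b s; rewrite Hbs in Hi.
      move=> <- /=; rewrite nth_index // eqxx andbT; exact: Hi.
have Hb : burge (iota 1 n) p = zip (iota 1 n) s.
  apply: (sorted_eq bl_trans bl_anti).
  + exact: sort_sorted bl_total _.
  + exact: sorted_zip_iota.
  + by rewrite /burge perm_sort perm_sym.
split.
- have H : perm_eq (unzip1 (zip (iota 1 n) s)) (unzip1 (sw (zip (iota 1 n) p))) := perm_map (@fst nat nat) HP.
  rewrite unzip1_sw unzip1_zip ?unzip2_zip ?size_iota ?Hp // in H.
  by rewrite -(cay_perm H) cay_iota.
- rewrite /gamma Hp Hb; change (unzip2 (zip (iota 1 n) s) = s).
  by rewrite unzip2_zip ?size_iota.
Qed.

Lemma part1 (y : seq nat) : is_cay y ->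
  forall x : seq nat, cls y x <-> fishburn (gamma y) x.
Proof.
move=> Hy x; split.
- case=> Hcx Hg; rewrite -Hg.
  have [Ht HSe Hbot Hgp [Hs1 Hs2]] := lemB x.
  exists (top (burge (iota 1 (size x)) x)); split; last by rewrite Hbot.
  apply: sorted_WI.
  + by rewrite (cay_perm Ht).
  + by rewrite Hs1 Hs2.
  + by rewrite (perm_uniq Hgp) iota_uniq.
  + rewrite -HSe; exact: sort_sorted bl_total _.
- case=> u [HW ->].
  have [_ _ _ Hgp [_ Hs2]] := lemB y.
  have HW' := HW; case/andP: HW' => /andP[/andP[Hcu _] /eqP Hsz] _.
  have [Hp Hg] := lemA Hgp (etrans Hsz Hs2) Hs2 (WI_sorted HW).
  split => //; by rewrite (cay_perm Hp).
Qed.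

Theorem lemma4p10 :
  (forall y : seq nat, is_cay y ->
     forall x : seq nat, cls y x <-> fishburn (gamma y) x) /\
  (forall s : seq nat, is_perm s ->
     forall x : seq nat, fishburn s x <-> cls (perm_inv s) x).
Proof.
split; first exact: part1.
move=> s Hs x; have [Hc Hg] := perm_inv_props Hs.
by rewrite -{1}Hg (part1 Hc x).
Qed.
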